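(* Let $G=(V,E)$ be a graph of order $n$ such that $\tau(G)=\tau>\frac{n}{2}$. If its $\tau$-set $W$ satisfies $G[W]\cong\overline{K_\tau}$ (i.e. $W$ is an independent set), then $\beta_p(G)=\tau$.
   Context: All graphs are finite, simple, undirected and connected. Two vertices $u,v$ are twins if $N(u)\setminus\{v\}=N(v)\setminus\{u\}$; the twin number $\tau(G)$ is the maximum cardinality of an equivalence class of the twin relation; a $\tau$-set is a set of pairwise twin vertices of cardinality $\tau(G)$ (unique when $\tau(G)>n/2$). For a partition $\Pi=\{S_1,\dots,S_k\}$ of $V(G)$, $r(u|\Pi)=(d(u,S_1),\dots,d(u,S_k))$ with $d(u,S)=\min_{w\in S}d(u,w)$; $\Pi$ is locating if $r(u|\Pi)\ne r(v|\Pi)$ for all distinct $u,v$; $\beta_p(G)$ is the minimum size of a locating partition. *)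

(* Defs.v *)
From mathcomp Require Import all_boot.
Set Implicit Arguments. Unset Strict Implicit. Unset Printing Implicit Defensive.

Section Graphs.
Variables (T : finType) (e : rel T).

Definition simple_graph : Prop := symmetric e /\ irreflexive e.
Definition connected_graph : Prop := forall x y : T, connect e x y.

Definition nbhd (u : T) : {set T} := [set w | e u w].

Definition ball (k : nat) (u : T) : {set T} :=
  iter k (fun A => A :|: [set y | [exists x in A, e x y]]) [set u].

(* d(u,S) = min_{w in S} d(u,w): least k such that the k-ball meets S
   (in a connected graph, and S nonempty, it is < #|T|) *)
Definition dist_set (u : T) (S : {set T}) : nat :=
  find (fun k => [exists w in S, w \in ball k u]) (iota 0 #|T|).

Definition dist (u v : T) : nat := dist_set u [set v].

Definition twins (u v : T) : bool := (nbhd u :\ v) == (nbhd v :\ u).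

Definition twin_class (u : T) : {set T} := [set v | twins u v].

Definition twin_number : nat := \max_(u : T) #|twin_class u|.

Definition tau_set (W : {set T}) : bool :=
  [forall u in W, forall v in W, twins u v] && (#|W| == twin_number).

(* locating partition: a partition of V(G) such that r(u|P) <> r(v|P)
   for all distinct u,v, i.e. some class S has d(u,S) <> d(v,S) *)
Definition locating_partition (P : {set {set T}}) : bool :=
  partition P [set: T] &&
  [forall u, forall v, (u != v) ==> [exists S in P, dist_set u S != dist_set v S]].

(* partition dimension: minimum size of a locating partition (the partition
   into singletons is locating, so #|T| is an upper bound) *)
Definition partition_dim : nat :=
  \big[minn/#|T|]_(P : {set {set T}} | locating_partition P) #|P|.

Definition independent (W : {set T}) : bool :=
  [forall u in W, forall v in W, ~~ e u v].

End Graphs.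

(* Main.v *)
Require Import Defs.
From mathcomp Require Import all_boot zify.
Set Implicit Arguments. Unset Strict Implicit. Unset Printing Implicit Defensive.

Lemma ballS (T : finType) (e : rel T) k v :
  ball e k.+1 v = ball e k v :|: [set y | [exists x in ball e k v, e x y]].
Proof. by []. Qed.

Lemma ball0 (T : finType) (e : rel T) v : ball e 0 v = [set v].
Proof. by []. Qed.

Lemma ball_self (T : finType) (e : rel T) k v : v \in ball e k v.
Proof. elim: k => [|k IH]; first by rewrite ball0 inE. by rewrite ballS inE IH. Qed.

Lemma iotaS m n : iota m n.+1 = m :: iota m.+1 n. Proof. by []. Qed.
Lemma find_cons (X : Type) (p : pred X) x s : find p (x :: s) = if p x then 0 else (find p s).+1.
Proof. by []. Qed.

Lemma dist_set0 (T : finType) (e : rel T) a (S : {set T}) :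
  (dist_set e a S == 0) = (a \in S).
Proof.
rewrite /dist_set.
have hT: 0 < #|T| by apply/card_gt0P; exists a.
rewrite -(prednK hT) iotaS find_cons. case: ifP => H.
  apply/esym; case/existsP: H => w /andP[wS]; rewrite ball0 inE => /eqP wa. by rewrite -wa wS.
apply/esym/negbTE; apply: contraFN H => aS; apply/existsP; exists a.
by rewrite aS ball0 inE eqxx.
Qed.

Lemma dist_set1 (T : finType) (e : rel T) a (S : {set T}) s :
  a \notin S -> s \in S -> e a s -> dist_set e a S = 1.
Proof.
move=> aS sS eas.
have h2 : 1 < #|T|.
  have as' : a != s by apply: contraNneq aS => ->.
  by move: (max_card [set a; s]); rewrite cards2 as'.
have [k Hk] : exists k, #|T| = k.+2 by exists (#|T| - 2); lia.
rewrite /dist_set Hk !iotaS !find_cons.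
have -> : [exists w in S, w \in ball e 0 a] = false.
  apply/negbTE/existsP => -[w /andP[wS]]; rewrite ball0 inE => /eqP wa.
  by move: aS; rewrite -wa wS.
have -> : [exists w in S, w \in ball e 1 a] = true.
  apply/existsP; exists s; rewrite sS ballS inE; apply/orP; right.
  by rewrite inE; apply/existsP; exists a; rewrite ball_self.
by [].
Qed.

Lemma dist_set_n1 (T : finType) (e : rel T) a (S : {set T}) :
  1 < #|T| -> a \notin S -> (forall s, s \in S -> ~~ e a s) -> dist_set e a S != 1.
Proof.
move=> h2 aS nS.
have [k Hk] : exists k, #|T| = k.+2 by exists (#|T| - 2); lia.
rewrite /dist_set Hk !iotaS !find_cons.
have -> : [exists w in S, w \in ball e 0 a] = false.
  apply/negbTE/existsP => -[w /andP[wS]]; rewrite ball0 inE => /eqP wa.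
  by move: aS; rewrite -wa wS.
have -> : [exists w in S, w \in ball e 1 a] = false.
  apply/negbTE/existsP => -[w /andP[wS]]; rewrite ballS inE ball0 => /orP[].
    rewrite inE => /eqP wa; by move: aS; rewrite -wa wS.
  rewrite inE; case/existsP => x /andP[]; rewrite inE => /eqP -> eaw.
  by move: (nS w wS); rewrite eaw.
by [].
Qed.

Lemma twin_ball (T : finType) (e : rel T) u v k y :
  twins e u v -> y \in ball e k u -> y != u -> y != v -> y \in ball e k v.
Proof.
move=> tw; elim: k y => [|k IH] y.
  by rewrite ball0 inE => /eqP ->; rewrite eqxx.
rewrite ballS inE => /orP[H yu yv|]; first by rewrite ballS inE IH.
rewrite inE => /existsP[x /andP[xb exy]] yu yv.
rewrite ballS inE; apply/orP; right; rewrite inE.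
case: (eqVneq x u) => [xu|xu].
  have : y \in nbhd e u :\ v by rewrite !inE yv -xu.
  rewrite (eqP tw) !inE => /andP[_ evy].
  by apply/existsP; exists v; rewrite ball_self.
case: (eqVneq x v) => [xv|xv].
  by apply/existsP; exists v; rewrite ball_self -xv.
by apply/existsP; exists x; rewrite IH.
Qed.

Lemma twins_sym (T : finType) (e : rel T) u v : twins e u v -> twins e v u.
Proof. by rewrite /twins eq_sym. Qed.

Lemma twin_dist (T : finType) (e : rel T) u v (S : {set T}) :
  twins e u v -> u \notin S -> v \notin S -> dist_set e u S = dist_set e v S.
Proof.
move=> tw uS vS; rewrite /dist_set; apply: eq_find => k /=.
apply/existsP/existsP => -[w /andP[wS wb]]; exists w; rewrite wS /=.
  apply: (twin_ball tw wb); [by apply: contraNneq uS => <- | by apply: contraNneq vS => <-].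
apply: (twin_ball (twins_sym tw) wb); [by apply: contraNneq vS => <- | by apply: contraNneq uS => <-].
Qed.

Lemma lower_bound (T : finType) (e : rel T) (W : {set T}) (P : {set {set T}}) :
  tau_set e W -> locating_partition e P -> #|W| <= #|P|.
Proof.
move=> /andP[/forall_inP tw _] /andP[/and3P[/eqP cov triv n0] /forallP loc].
have inj : {in W &, injective (pblock P)}.
  move=> u v uW vW eqb; apply/eqP/negPn/negP => neq.
  move: (loc u) => /forallP /(_ v); rewrite neq /= => /existsP[S /andP[SP dS]].
  have tuv : twins e u v by move: (tw u uW) => /forall_inP /(_ v vW).
  have uB : u \in pblock P u by rewrite mem_pblock cov inE.
  have vB : v \in pblock P u by rewrite eqb mem_pblock cov inE.
  have BP : pblock P u \in P by apply: pblock_mem; rewrite cov inE.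
  case: (eqVneq S (pblock P u)) => [SB|SB].
    by move: dS; rewrite SB; move: (dist_set0 e u (pblock P u)) (dist_set0 e v (pblock P u));
       rewrite uB vB => /eqP -> /eqP ->.
  have dj := trivIsetP triv S (pblock P u) SP BP SB.
  move: dS; rewrite (twin_dist tuv) ?(disjointFl dj) //.
  by rewrite eqxx.
rewrite -(card_in_imset inj); apply: subset_leq_card; apply/subsetP => B /imsetP[x _ ->].
by apply: pblock_mem; rewrite cov inE.
Qed.

Lemma upper_bound (T : finType) (e : rel T) (W : {set T}) :
  simple_graph e -> #|T| < 2 * twin_number e -> tau_set e W -> independent e W ->
  exists P, locating_partition e P && (#|P| <= #|W|).
Proof.
move=> [esym eirr] hn tauW indW.
have /andP[/forall_inP tw /eqP cW] := tauW.
have tw' : forall u v, u \in W -> v \in W -> twins e u v.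
  by move=> u v uW vW; move: (tw u uW) => /forall_inP /(_ v vW).
have ind : forall u v, u \in W -> v \in W -> ~~ e u v.
  by move=> u v uW vW; move/forall_inP: indW => /(_ u uW) /forall_inP /(_ v vW).
have cU : #|~: W| < #|W|.
  by move: (cardsC W); rewrite -cW in hn; lia.
have [w0 w0W] : exists w0, w0 \in W.
  by apply/set0Pn; rewrite -card_gt0; lia.
set sU := enum (~: W).
set sW := enum (W :\ w0).
pose h x := nth w0 sW (index x sU).
pose f x := if x \in W then x else h x.
have hW : forall x, x \notin W -> h x \in W :\ w0.
  move=> x xW; rewrite -mem_enum; apply: mem_nth.
  have : index x sU < size sU by rewrite index_mem mem_enum inE.
  rewrite /sU /sW.
  rewrite -!cardE.
  by move: (cardsD1 w0 W); rewrite w0W; lia.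
have fW : forall x, x \in W -> f x = x by move=> x xW; rewrite /f xW.
have fU : forall x, x \notin W -> f x = h x by move=> x xW; rewrite /f (negbTE xW).
have fin : forall x, f x \in W.
  move=> x; case: (boolP (x \in W)) => xW; first by rewrite fW.
  by rewrite fU //; move: (hW x xW); rewrite inE => /andP[].
have fn0 : forall x, x \notin W -> f x != w0.
  by move=> x xW; rewrite fU //; move: (hW x xW); rewrite !inE; case/andP.
have finj : forall x y, x \notin W -> y \notin W -> f x = f y -> x = y.
  move=> x y xW yW; rewrite !fU // /h => H.
  have xs : x \in sU by rewrite mem_enum inE.
  have ys : y \in sU by rewrite mem_enum inE.
  have szW : size sU <= size sW.
    rewrite /sU /sW -!cardE; by move: (cardsD1 w0 W); rewrite w0W; lia.
  apply: (index_inj x xs ys).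
  move/eqP: H; rewrite nth_uniq ?enum_uniq //; first by move/eqP.
    by apply: leq_trans szW; rewrite index_mem.
  by apply: leq_trans szW; rewrite index_mem.
pose C z := [set y in [set: T] | f z == f y].
pose P := preim_partition f [set: T].
have CP : forall z, C z \in P.
  move=> z; rewrite /P /preim_partition /equivalence_partition.
  by apply/imsetP; exists z; rewrite ?inE.
have inC : forall z y, (y \in C z) = (f z == f y) by move=> z y; rewrite !inE.
exists P; apply/andP; split; last first.
  have -> : P = C @: W.
    apply/setP => B; apply/imsetP/imsetP => -[x _ ->].
      exists (f x); first exact: fin.
      apply/setP => y; rewrite !inE; by rewrite (fW _ (fin x)).
    by exists x; rewrite ?inE.
  exact: leq_imset_card.
have fWU : forall x, x \notin W -> f x \in W := fun x _ => fin x.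
have key : forall u, u \notin W ->
    exists2 S, S \in P & dist_set e (f u) S != dist_set e u S.
  move=> u uW.
  have wiW := fin u.
  have wiu : f u != u by apply: contraNneq uW => <-.
  have h2 : 1 < #|T| by move: (max_card [set f u; u]); rewrite cards2 wiu.
  have fwi : f (f u) = f u by rewrite fW.
  case: (boolP [exists w in W, e u w]) => [/exists_inP[w wW euw]|noW].
    exists (C w0); first exact: CP.
    have euw0 : e u w0.
      case: (eqVneq w w0) => [<-//|ww0].
      have : u \in nbhd e w :\ w0.
        rewrite !inE esym euw andbT; by apply: contraNneq uW => ->.
      by rewrite (eqP (tw' w w0 wW w0W)) !inE esym => /andP[_ ->].
    have inC0 : forall y, y \in C w0 -> y = w0.
      move=> y; rewrite inC fW // => /eqP H.
      case: (boolP (y \in W)) => yW; first by rewrite -(fW y yW) -H.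
      by move: (fn0 y yW); rewrite -H eqxx.
    rewrite (@dist_set1 _ _ u _ w0) //; last first.
      - by rewrite inC eqxx.
      - by apply/negP => /inC0 uw0; move: uW; rewrite uw0 w0W.
    apply: dist_set_n1 => //.
      by apply/negP => /inC0 H; move: (fn0 u uW); rewrite H eqxx.
    by move=> s /inC0 ->; apply: ind.
  have nW : forall w, w \in W -> ~~ e u w.
    by move=> w wW; apply: contraNN noW => euw; apply/exists_inP; exists w.
  have ntw : ~~ twins e (f u) u.
    apply/negP => twu.
    have sub : u |: W \subset twin_class e (f u).
      apply/subsetP => x; rewrite !inE => /orP[/eqP->|xW]; first exact: twu.
      exact: (tw' _ x wiW xW).
    have := subset_leq_card sub; rewrite cardsU1 uW cW.
    have : #|twin_class e (f u)| <= twin_number e := leq_bigmax _.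
    lia.
  have [y Hy] : exists y, (y \in nbhd e (f u) :\ u) != (y \in nbhd e u :\ f u).
    apply/existsP; apply: contraNT ntw => /existsPn H.
    by apply/eqP/setP => y; move: (H y); move/negPn/eqP.
  rewrite !inE in Hy.
  have fyu : forall z, z \notin W -> z != u -> f z != f u.
    by move=> z zW zu; apply/negP => /eqP /(finj _ _ zW uW) zu'; rewrite zu' eqxx in zu.
  have nC : forall x z, z \notin W -> (forall w, w \in W -> ~~ e x w) -> ~~ e x z ->
      forall s, s \in C z -> ~~ e x s.
    move=> x z zW nxW nxz s; rewrite inC => /eqP H.
    case: (boolP (s \in W)) => sinW; first exact: nxW.
    by rewrite -(finj _ _ zW sinW H).
  move: Hy; case ewy: (e (f u) y); case euy: (e u y); rewrite ?andbF ?andbT => Hy.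
  - have yu : y != u by apply: contraTneq euy => ->; rewrite eirr.
    have ywi : y != f u by apply: contraTneq ewy => ->; rewrite eirr.
    by rewrite yu ywi in Hy.
  - have yW : y \notin W by apply: contraTN ewy => yW; apply: ind.
    have yu : y != u by move: Hy; case: (y != u).
    exists (C y); first exact: CP.
    rewrite (@dist_set1 _ _ (f u) _ y) //; last first.
      - by rewrite inC eqxx.
      - by rewrite inC fwi; apply: fyu.
    rewrite eq_sym; apply: dist_set_n1 => //.
      by rewrite inC; apply: fyu.
    by apply: nC => //; rewrite euy.
  - have yW : y \notin W by apply: contraTN euy => yW; apply: nW.
    have yu : y != u by apply: contraTneq euy => ->; rewrite eirr.
    exists (C y); first exact: CP.
    rewrite (@dist_set1 _ _ u _ y) //; last first.
      - by rewrite inC eqxx.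
      - by rewrite inC; apply: fyu.
    apply: dist_set_n1 => //.
      by rewrite inC fwi; apply: fyu.
    apply: nC => //; last by rewrite ewy.
    by move=> w wW; apply: ind.
  - by [].
apply/andP; split; first exact: preim_partitionP.
apply/forallP => a; apply/forallP => b; apply/implyP => ab.
case: (eqVneq (f a) (f b)) => [fab|fab].
  case: (boolP (a \in W)) => aW; case: (boolP (b \in W)) => bW.
  - by move: fab; rewrite !fW // => abeq; rewrite abeq eqxx in ab.
  - have [S SP dS] := key b bW; apply/exists_inP; exists S => //.
    by rewrite -fab fW in dS.
  - have [S SP dS] := key a aW; apply/exists_inP; exists S => //.
    by rewrite fab fW // eq_sym in dS.
  - by rewrite (finj _ _ aW bW fab) eqxx in ab.
apply/exists_inP; exists (C a); first exact: CP.
have := dist_set0 e a (C a); rewrite inC eqxx => /eqP ->.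
by rewrite eq_sym dist_set0 inC.
Qed.

Lemma bigmin_le (I : eqType) (r : seq I) (p : pred I) (F : I -> nat) x i0 :
  i0 \in r -> p i0 -> \big[minn/x]_(i <- r | p i) F i <= F i0.
Proof.
elim: r => [//|a r IH]; rewrite inE big_cons => /orP[/eqP<-|H] pi.
  by rewrite pi geq_minl.
case: (p a); last exact: IH.
exact: leq_trans (geq_minr _ _) (IH H pi).
Qed.

Theorem proposition17 (T : finType) (e : rel T) (W : {set T}) :
  simple_graph e -> connected_graph e ->
  #|T| < 2 * twin_number e ->
  tau_set e W -> independent e W ->
  partition_dim e = twin_number e.
Proof.
move=> sg _ hn tauW indW.
have cW : #|W| = twin_number e by case/andP: tauW => _ /eqP.
have [P0 /andP[loc0 c0]] := upper_bound sg hn tauW indW.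
apply/eqP; rewrite eqn_leq; apply/andP; split.
  rewrite /partition_dim -cW.
  by apply: leq_trans c0; apply: bigmin_le; rewrite ?mem_index_enum.
rewrite /partition_dim; apply: (big_ind (fun m => twin_number e <= m)).
- by rewrite -cW max_card.
- by move=> x y hx hy; rewrite leq_min hx hy.
- move=> P locP; rewrite -cW. exact: (lower_bound tauW locP).
Qed.
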